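(* Let $\mathbb F$ be algebraically closed and $A(s),B(s)\in\mathbb F[s]^{p\times q}$ pencils, with ranks $\rho_1,\rho_2$, $\rho=\min\{\rho_1,\rho_2\}$, homogeneous invariant factors $\phi_1\mid\cdots\mid\phi_{\rho_1}$ of $A(s)$ and $\psi_1\mid\cdots\mid\psi_{\rho_2}$ of $B(s)$, column minimal indices $c_1\ge\dots\ge c_{q-\rho_1}$ of $A$ and $d_1\ge\dots\ge d_{q-\rho_2}$ of $B$, row minimal indices $u_1\ge\dots\ge u_{p-\rho_1}$ of $A$ and $v_1\ge\dots\ge v_{p-\rho_2}$ of $B$. Let $(r_1,\dots),(s_1,\dots),(r'_1,\dots),(s'_1,\dots)$ be the conjugate partitions of $(c_i),(d_i),(u_i),(v_i)$, $r_0=q-\rho_1$, $s_0=q-\rho_2$, $r'_0=p-\rho_1$, $s'_0=p-\rho_2$, $\mathbf r=(r_0,r_1,\dots)$, $\mathbf s=(s_0,s_1,\dots)$, $\mathbf r'=(r'_0,r'_1,\dots)$, $\mathbf s'=(s'_0,s'_1,\dots)$. Assume $\mathbf r\ne\mathbf s$, $\mathbf r'=\mathbf s'$, and $$G\le\sum_{i=1}^\rho\min\{r_i,s_i\}+\max\{e,e'\},$$ where $x=\min\{i: r_i\ne s_i\}$, $e=\min\{i\ge x-1: s_{i+1}\ge r_{i+1}\}$, $e'=\min\{i\ge x-1: r_{i+1}\ge s_{i+1}\}$, $G=\rho-1-\sum_{i=1}^{\rho-1}\deg\gcd(\phi_{i+1},\psi_{i+1})-\sum_{i=1}^{\rho}r'_i$.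 Consider the conditions (D$\phi$): $\phi_j\mid\psi_j$ for $1\le j\le\rho$; (D$\psi$): $\psi_j\mid\phi_j$ for $1\le j\le\rho$. Then: 1. If $e>e'$: (a) for $i\in\{x,\dots,e\}$, $-x-1\le s_i-r_i\le-1$, and if $s_i-r_i=-x-1$ then (D$\phi$) holds; (b) for $i>e$, $-x\le s_i-r_i\le e+1$, and if $s_i-r_i=e+1$ then (D$\psi$) holds. 2. If $e'>e$: (a) for $i\in\{x,\dots,e'\}$, $-x-1\le r_i-s_i\le-1$, and if $r_i-s_i=-x-1$ then (D$\psi$) holds; (b) for $i>e'$, $-x\le r_i-s_i\le e'+1$, and if $r_i-s_i=e'+1$ then (D$\phi$) holds.
   Context: A pencil $A(s)=A_0+sA_1$ has rank equal to its rank over $\mathbb F(s)$. Homogeneous invariant factors are the invariant factors (homogeneous polynomials in $\mathbb F[s,t]$) of $tA_0+sA_1$, with conventions $\phi_i=1$ for $i<1$, $\phi_i=0$ for $i>\rho_1$ (similarly $\psi_i$). Column (row) minimal indices are the indices $k$ of the blocks $L_k(s)\in\mathbb F[s]^{k\times(k+1)}$ ($s$ on the diagonal, $1$ on superdiagonal), resp. $L_k(s)^T$, in the Kronecker canonical form, $q-\rho$ (resp. $p-\rho$) of them counting zeros. Conjugate of $(a_1,\dots,a_n)$ nonincreasing nonnegative: $(\bar a_1,\bar a_2,\dots)$, $\bar a_k=\#\{i:a_i\ge k\}$. *)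

(* Defs.v *)
From HB Require Import structures.
From mathcomp Require Import all_boot all_order all_algebra.
From mathcomp Require Import fraction mpoly.
Set Implicit Arguments. Unset Strict Implicit. Unset Printing Implicit Defensive.
Import Order.TTheory GRing.Theory Num.Theory.
Local Open Scope ring_scope.

Section Pencils.
Variable F : fieldType.

(* Bivariate polynomials F[s,t]: s = 'X_0, t = 'X_1. *)
Notation bipoly := {mpoly F[2]}.

Definition mdvd (a b : bipoly) : Prop := exists c : bipoly, b = c * a.

Definition is_gcd (g a b : bipoly) : Prop :=
  mdvd g a /\ mdvd g b /\ forall d, mdvd d a -> mdvd d b -> mdvd d g.

Definition tdeg (g : bipoly) : nat := (msize g).-1.

Definition pen p q (A0 A1 : 'M[F]_(p, q)) : 'M[{poly F}]_(p, q) :=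
  \matrix_(i, j) ((A0 i j)%:P + 'X * (A1 i j)%:P).

Definition hpen p q (A0 A1 : 'M[F]_(p, q)) : 'M[bipoly]_(p, q) :=
  \matrix_(i, j) ('X_1 * (A0 i j)%:MP + 'X_0 * (A1 i j)%:MP).

Definition pen_rank p q (A0 A1 : 'M[F]_(p, q)) : nat :=
  \rank (map_mx (fun a : {poly F} => FracField.tofrac a) (pen A0 A1)).

Definition gcd_minors p q (M : 'M[bipoly]_(p, q)) (k : nat) (D : bipoly) : Prop :=
  (forall (f : 'I_k -> 'I_p) (g : 'I_k -> 'I_q), mdvd D (\det (mxsub f g M))) /\
  (forall d, (forall (f : 'I_k -> 'I_p) (g : 'I_k -> 'I_q), mdvd d (\det (mxsub f g M)))
             -> mdvd d D).

(* phi 1, ..., phi r are homogeneous invariant factors of the pencil A0 + s A1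
   of rank r : phi 1 * ... * phi k is the k-th determinantal divisor of t A0 + s A1. *)
Definition hinv_factors p q (A0 A1 : 'M[F]_(p, q)) (phi : nat -> bipoly) : Prop :=
  forall k, (1 <= k <= pen_rank A0 A1)%N ->
    gcd_minors (hpen A0 A1) k (\prod_(1 <= i < k.+1) phi i).

Definition Lblock (k : nat) : 'M[{poly F}]_(k, k.+1) :=
  \matrix_(i < k, j < k.+1)
    (if (j == i :> nat) then 'X else if (j == i.+1 :> nat) then 1 else 0).

Fixpoint Lblocks (cs : seq nat) : 'M[{poly F}]_(sumn cs, sumn (map S cs)) :=
  match cs return 'M[{poly F}]_(sumn cs, sumn (map S cs)) with
  | [::] => 0
  | c :: cs' => block_mx (Lblock c) 0 0 (Lblocks cs')
  end.

Definition KCFmx (cs us : seq nat) n (R0 R1 : 'M[F]_n) :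
  'M[{poly F}]_(sumn cs + sumn (map S us) + n, sumn (map S cs) + sumn us + n) :=
  block_mx (block_mx (Lblocks cs) 0 0 (Lblocks us)^T) 0 0 (pen R0 R1).

(* cs (resp. us) is the list (with multiplicity, zeros included) of column
   (resp. row) minimal indices of A0 + s A1: the pencil is strictly equivalent
   to diag(L_{c}, L_{u}^T, regular part); the regular part is any regular
   pencil (which in turn is strictly equivalent to Jordan/infinite blocks). *)
Definition minimal_indices p q (A0 A1 : 'M[F]_(p, q)) (cs us : seq nat) : Prop :=
  exists n (R0 R1 : 'M[F]_n) (P : 'M[F]_p) (Q : 'M[F]_q)
         (Ep : (sumn cs + sumn (map S us) + n = p)%N)
         (Eq : (sumn (map S cs) + sumn us + n = q)%N),
    [/\ P \in unitmx, Q \in unitmx, \det (pen R0 R1) != 0 &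
        map_mx polyC P *m pen A0 A1 *m map_mx polyC Q
        = castmx (Ep, Eq) (KCFmx cs us R0 R1)].

End Pencils.

Definition conjseq (r0 : nat) (cs : seq nat) (k : nat) : nat :=
  if k == 0%N then r0 else count (fun c => (k <= c)%N) cs.

(* Main.v *)
Require Import Defs.
From HB Require Import structures.
From mathcomp Require Import all_boot all_order all_algebra.
From mathcomp Require Import mpoly.
From mathcomp Require Import fraction perm zify.
Import Order.TTheory GRing.Theory Num.Theory.
Local Open Scope ring_scope.

Lemma msize_gt0 {F : fieldType} {a : {mpoly F[2]}} : a != 0 -> (0 < msize a)%N.
Proof. by move=> h; rewrite lt0n msize_poly_eq0. Qed.

Lemma tdegM {F : fieldType} {a b : {mpoly F[2]}} : a != 0 -> b != 0 ->
  tdeg (a * b) = (tdeg a + tdeg b)%N.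
Proof.
move=> ha hb; rewrite /tdeg msizeM //.
case: (msize a) (msize_gt0 ha) => // m1 _; case: (msize b) (msize_gt0 hb) => // m2 _.
by rewrite addSn addnS.
Qed.

Lemma tdeg0_const {F : fieldType} {a : {mpoly F[2]}} : a != 0 -> tdeg a = 0%N ->
  exists k : F, k != 0 /\ a = k%:MP.
Proof.
move=> ha h0; have h1 : (msize a <= 1)%N by move: h0; rewrite /tdeg -subn1; lia.
exists (a@_0); rewrite -msize1_polyC //; split => //.
by move: ha; rewrite {1}(msize1_polyC h1) mpolyC_eq0.
Qed.

Lemma tdeg_dvd {F : fieldType} {a b : {mpoly F[2]}} : mdvd a b -> b != 0 ->
  (tdeg a <= tdeg b)%N /\ (tdeg a = tdeg b -> mdvd b a).
Proof.
move=> [c ->] hb.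
have hc : c != 0 by apply: contraNneq hb => ->; rewrite mul0r.
have ha : a != 0 by apply: contraNneq hb => ->; rewrite mulr0.
rewrite tdegM //; split; first by lia.
move=> heq; have [k [hk ck]] := tdeg0_const hc (ltac:(lia)).
by exists (k^-1)%:MP; rewrite ck mulrA -mpolyCM mulVf // mul1r.
Qed.

Lemma tdeg0_dvd {F : fieldType} {a b : {mpoly F[2]}} : a != 0 -> tdeg a = 0%N -> mdvd a b.
Proof.
move=> ha h0; have [k [hk ->]] := tdeg0_const ha h0.
by exists (b * (k^-1)%:MP); rewrite -mulrA -mpolyCM mulVf // mulr1.
Qed.
Lemma Xnz {F : fieldType} (j : 'I_2) : ('X_j : {mpoly F[2]}) != 0.
Proof. by rewrite -msize_poly_eq0 msizeX. Qed.

Lemma lead_comp {F : fieldType} (D Rr : {mpoly F[2]}) (a : nat) (j : 'I_2) : Rr != 0 ->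
  mdvd D ('X_j ^+ a * Rr) -> D != 0 /\ forall i, i != j -> (mlead D i <= mlead Rr i)%N.
Proof.
move=> hR [c hc].
have hX : 'X_j ^+ a * Rr != 0 by rewrite mulf_neq0 // expf_neq0 // Xnz.
have hD : D != 0 by apply: contraNneq hX => hD0; rewrite hc hD0 mulr0.
have hc0 : c != 0 by apply: contraNneq hX => hc00; rewrite hc hc00 mul0r.
split => // i hij.
have := congr1 (@mlead 2 F) hc; rewrite !mleadM // ?expf_neq0 ?Xnz // mleadX ?Xnz //.
rewrite mleadXm => /mnmP /(_ i); rewrite !mnmDE mulmnE mnm1E eq_sym (negbTE hij) mul0n add0n.
move=> ->; exact: leq_addl.
Qed.

Lemma lead_bound {F : fieldType} (D Rr : {mpoly F[2]}) (a : nat) : Rr != 0 ->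
  mdvd D ('X_0 ^+ a * Rr) -> mdvd D ('X_1 ^+ a * Rr) -> D != 0 /\ (tdeg D <= tdeg Rr)%N.
Proof.
move=> hR h0 h1.
have [hD H0] := lead_comp _ _ _ _ hR h0.
have [_ H1] := lead_comp _ _ _ _ hR h1.
split => //.
rewrite /tdeg -(mlead_deg hD) -(mlead_deg hR) /= !mdegE.
apply: leq_sum => i _.
case: (eqVneq i 0) => [->|hi]; last exact: H0.
by apply: H1.
Qed.

Lemma msizeM_le2 {F : fieldType} (p q : {mpoly F[2]}) :
  (msize (p * q) <= (msize p + msize q).-1)%N.
Proof.
have [->|nz_p] := eqVneq p 0; first by rewrite mul0r msize0.
have [->|nz_q] := eqVneq q 0; first by rewrite mulr0 msize0.
by rewrite msizeM.
Qed.

Lemma msize_prod_le {F : fieldType} n (G : 'I_n -> {mpoly F[2]}) :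
  (forall i, (msize (G i) <= 2)%N) -> (msize (\prod_i G i) <= n.+1)%N.
Proof.
elim: n G => [|n IH] G hG; first by rewrite big_ord0 msize1.
rewrite big_ord_recr /=; apply: leq_trans (msizeM_le2 _ _) _.
have := IH (fun i => G (widen_ord (leqnSn n) i)) (fun i => hG _).
have := hG ord_max; move=> h1 h2; rewrite -subn1 leq_subLR; apply: leq_trans (leq_add h2 h1) _; lia.
Qed.

Lemma tdeg_det {F : fieldType} n (M : 'M[{mpoly F[2]}]_n) :
  (forall i j, (msize (M i j) <= 2)%N) -> (tdeg (\det M) <= n)%N.
Proof.
move=> hM; rewrite /tdeg; suff : (msize (\det M) <= n.+1)%N by lia.
rewrite /determinant; apply: (big_ind (fun x : {mpoly F[2]} => msize x <= n.+1)%N).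
- by rewrite msize0.
- move=> x y hx hy; apply: leq_trans (msizeD_le _ _) _; by rewrite geq_max hx hy.
move=> s _; apply: leq_trans (msizeM_le2 _ _) _;
have := msize_prod_le _ (fun i => M i (s i)) (fun i => hM _ _).
have : (msize ((-1) ^+ s : {mpoly F[2]}) <= 1)%N.
  by case: (odd_perm s) => /=; rewrite ?expr1 ?expr0 ?msizeN msize1.
move=> h1 h2; rewrite -subn1 leq_subLR; apply: leq_trans (leq_add h1 h2) _; lia.
Qed.

Lemma msize_lin {F : fieldType} (i j : 'I_2) (c d : F) :
  (msize (('X_i : {mpoly F[2]}) * c%:MP + 'X_j * d%:MP) <= 2)%N.
Proof.
apply: leq_trans (msizeD_le _ _) _; rewrite geq_max.
have h : forall (k : 'I_2) (e : F), (msize (('X_k : {mpoly F[2]}) * e%:MP) <= 2)%N.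
  move=> k e; apply: leq_trans (msizeM_le2 _ _) _.
  rewrite msizeX mdeg1 msizeC; case: (e != 0) => //.
by rewrite !h.
Qed.

Lemma tdeg_prod {F : fieldType} (phi : nat -> {mpoly F[2]}) k :
  \prod_(1 <= i < k.+1) phi i != 0 ->
  tdeg (\prod_(1 <= i < k.+1) phi i) = (\sum_(1 <= i < k.+1) tdeg (phi i))%N.
Proof.
elim: k => [|k IH]; first by rewrite !big_geq // => _; rewrite /tdeg msize1.
move=> h; have e1 : \prod_(1 <= i < k.+2) phi i = (\prod_(1 <= i < k.+1) phi i) * phi k.+1.
  by rewrite big_nat_recr.
have e2 : (\sum_(1 <= i < k.+2) tdeg (phi i) = \sum_(1 <= i < k.+1) tdeg (phi i) + tdeg (phi k.+1))%N.
  by rewrite big_nat_recr.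
rewrite e1 e2; rewrite e1 in h.
have h1 : \prod_(1 <= i < k.+1) phi i != 0 by apply: contraNneq h => ->; rewrite mul0r.
have h2 : phi k.+1 != 0 by apply: contraNneq h => ->; rewrite mulr0.
by rewrite tdegM // IH.
Qed.

Definition dv {T : comRingType} (a b : T) := exists c, b = c * a.

Lemma dv0 {T : comRingType} (a : T) : dv a 0.
Proof. by exists 0; rewrite mul0r. Qed.

Lemma dvD {T : comRingType} (a b1 b2 : T) : dv a b1 -> dv a b2 -> dv a (b1 + b2).
Proof. by move=> [c1 ->] [c2 ->]; exists (c1 + c2); rewrite mulrDl. Qed.

Lemma dvM {T : comRingType} (a b x : T) : dv a b -> dv a (x * b).
Proof. by move=> [c ->]; exists (x * c); rewrite mulrA. Qed.

Lemma dv_sum {T : comRingType} (I : Type) (r : seq I) (P : pred I) (F : I -> T) (a : T) :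
  (forall i, P i -> dv a (F i)) -> dv a (\sum_(i <- r | P i) F i).
Proof.
move=> h; elim/big_rec: _ => [|i x Pi hx]; first exact: dv0.
by apply: dvD => //; apply: h.
Qed.

Lemma det_mul_rect {T : comRingType} k p (X : 'M[T]_(k, p)) (N : 'M[T]_(p, k)) :
  \det (X *m N) = \sum_(h : {ffun 'I_k -> 'I_p}) (\prod_i X i (h i)) * \det (rowsub h N).
Proof.
rewrite /determinant.
transitivity (\sum_(s : 'S_k) \sum_(h : {ffun 'I_k -> 'I_p})
     (-1) ^+ s * ((\prod_i X i (h i)) * \prod_i N (h i) (s i))).
  apply: eq_bigr => s _; rewrite -big_distrr /=; congr (_ * _).
  under eq_bigr do rewrite mxE.
  rewrite (bigA_distr_bigA (fun i l => X i l * N l (s i))) /=.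
  by apply: eq_bigr => h _; rewrite big_split.
rewrite exchange_big /=; apply: eq_bigr => h _.
rewrite big_distrr /=; apply: eq_bigr => s _.
rewrite mulrCA; congr (_ * (_ * _)).
by apply: eq_bigr => i _; rewrite mxE.
Qed.

Lemma dvd_det_mulmx {T : comRingType} k p q (M : 'M[T]_(p, q)) (D : T) :
  (forall (f : 'I_k -> 'I_p) (g : 'I_k -> 'I_q), dv D (\det (mxsub f g M))) ->
  forall (X : 'M_(k, p)) (Y : 'M_(q, k)), dv D (\det (X *m M *m Y)).
Proof.
move=> hD X Y; rewrite -mulmxA det_mul_rect; apply: dv_sum => h _; apply: dvM.
rewrite -mul_rowsub_mx -det_tr trmx_mul det_mul_rect; apply: dv_sum => h' _; apply: dvM.
have -> : rowsub h' (rowsub h M)^T = (mxsub h h' M)^T.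
  by apply/matrixP => i j; rewrite !mxE.
by rewrite det_tr; apply: hD.
Qed.

Definition Lg {T : nzRingType} (a b : T) (k : nat) : 'M[T]_(k, k.+1) :=
  \matrix_(i < k, j < k.+1) (if (j == i :> nat) then a else if (j == i.+1 :> nat) then b else 0).

Fixpoint Lgs {T : nzRingType} (a b : T) (cs : seq nat) : 'M[T]_(sumn cs, sumn (map S cs)) :=
  match cs return 'M[T]_(sumn cs, sumn (map S cs)) with
  | [::] => 0
  | c :: cs' => block_mx (Lg a b c) 0 0 (Lgs a b cs')
  end.

Definition Selm {T : nzRingType} m k (h : 'I_k -> 'I_m) : 'M[T]_(m, k) :=
  \matrix_(j, i) (j == h i)%:R.

Arguments Selm {T m k}.

Lemma mul_Selm {T : nzRingType} n m k (h : 'I_k -> 'I_m) (M : 'M[T]_(n, m)) :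
  M *m Selm h = \matrix_(i < n, j < k) M i (h j).
Proof.
apply/matrixP => i j; rewrite !mxE (bigD1 (h j)) //= big1 ?addr0.
  by rewrite mxE eqxx mulr1.
by move=> l hl; rewrite mxE (negbTE hl) mulr0.
Qed.

Definition sel0 {T : nzRingType} k : 'M[T]_(k.+1, k) := Selm (fun i : 'I_k => widen_ord (leqnSn k) i).
Definition sel1 {T : nzRingType} k : 'M[T]_(k.+1, k) := Selm (fun i : 'I_k => lift ord0 i).

Fixpoint Sels {T : nzRingType} (sel : forall k, 'M[T]_(k.+1, k)) (cs : seq nat) :
  'M[T]_(sumn (map S cs), sumn cs) :=
  match cs return 'M[T]_(sumn (map S cs), sumn cs) with
  | [::] => 0
  | c :: cs' => block_mx (sel c) 0 0 (Sels sel cs')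
  end.

Lemma det_Lgs {T : comRingType} (a b z : T) (sel : forall k, 'M[T]_(k.+1, k)) :
  (forall k, \det (Lg a b k *m sel k) = z ^+ k) ->
  forall cs, \det (Lgs a b cs *m Sels sel cs) = z ^+ sumn cs.
Proof.
move=> h; elim => [|c cs IH] /=; first by rewrite det_mx00 expr0.
rewrite mulmx_block !mulmx0 !mul0mx !addr0 !add0r det_ublock h IH exprD.
done.
Qed.

Lemma det_Lg0 {T : comRingType} (a b : T) k : \det (Lg a b k *m sel0 k) = a ^+ k.
Proof.
rewrite /sel0 mul_Selm -det_tr det_trig.
  rewrite (eq_bigr (fun _ => a)) ?prodr_const ?card_ord // => i _.
  by rewrite !mxE /= eqxx.
apply/is_trig_mxP => i j hij; rewrite !mxE /=.
rewrite ifN; last by rewrite neq_ltn hij.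
by rewrite ifN // neq_ltn (ltn_trans hij (ltnSn j)).
Qed.

Lemma det_Lg1 {T : comRingType} (a b : T) k : \det (Lg a b k *m sel1 k) = b ^+ k.
Proof.
rewrite /sel1 mul_Selm det_trig.
  rewrite (eq_bigr (fun _ => b)) ?prodr_const ?card_ord // => i _.
  rewrite !mxE /= /bump leq0n add1n ifN ?eqxx //.
  by rewrite neq_ltn ltnSn orbT.
apply/is_trig_mxP => i j hij; rewrite !mxE /= /bump leq0n add1n.
rewrite ifN; last by rewrite neq_ltn (ltn_trans hij (ltnSn j)) orbT.
by rewrite ifN // eqSS neq_ltn hij orbT.
Qed.

Definition Xm {T : nzRingType} (sel : forall k, 'M[T]_(k.+1, k)) (cs us : seq nat) n :
  'M[T]_(sumn cs + sumn us + n, sumn cs + sumn (map S us) + n) :=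
  block_mx (block_mx 1%:M 0 0 (Sels sel us)^T) 0 0 1%:M.

Definition Ym {T : nzRingType} (sel : forall k, 'M[T]_(k.+1, k)) (cs us : seq nat) n :
  'M[T]_(sumn (map S cs) + sumn us + n, sumn cs + sumn us + n) :=
  block_mx (block_mx (Sels sel cs) 0 0 1%:M) 0 0 1%:M.

Definition Kgen {T : nzRingType} (a b : T) (cs us : seq nat) {n} (Rm : 'M[T]_n) :
  'M[T]_(sumn cs + sumn (map S us) + n, sumn (map S cs) + sumn us + n) :=
  block_mx (block_mx (Lgs a b cs) 0 0 (Lgs a b us)^T) 0 0 Rm.

Lemma det_minor {T : comRingType} (a b z : T) (sel : forall k, 'M[T]_(k.+1, k)) cs us n
  (Rm : 'M[T]_n) :
  (forall k, \det (Lg a b k *m sel k) = z ^+ k) ->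
  \det (Xm sel cs us n *m Kgen a b cs us Rm *m Ym sel cs us n) = z ^+ (sumn cs + sumn us) * \det Rm.
Proof.
move=> h; rewrite /Xm /Kgen /Ym.
do 3!(rewrite ?mulmx_block ?mulmx0 ?mul0mx ?addr0 ?add0r ?mul1mx ?mulmx1).
rewrite !det_ublock -trmx_mul det_tr !(det_Lgs _ _ _ _ h) exprD. done.
Qed.

Lemma sum_split3 (f : nat -> nat) m i n : (m <= i < n)%N ->
  (\sum_(m <= k < n) f k = \sum_(m <= k < i) f k + f i + \sum_(i.+1 <= k < n) f k)%N.
Proof.
move=> /andP[h1 h2]; rewrite (@big_cat_nat _ _ _ i) //=; last exact: ltnW.
by rewrite (big_ltn h2) addnA.
Qed.

Lemma sum_sub_range (f : nat -> nat) m a b n : (m <= a)%N -> (a <= b)%N -> (b <= n)%N ->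
  (\sum_(a <= k < b) f k <= \sum_(m <= k < n) f k)%N.
Proof.
move=> h1 h2 h3.
rewrite (@big_cat_nat _ _ _ a m n) //=; last exact: leq_trans h3.
rewrite (@big_cat_nat _ _ _ b a n) //=.
lia.
Qed.

Lemma sum_ge_len (f : nat -> nat) a b : (forall k, (a <= k < b)%N -> (1 <= f k)%N) ->
  (b - a <= \sum_(a <= k < b) f k)%N.
Proof.
move=> h; rewrite -[X in (X <= _)%N]muln1 -sum_nat_const_nat.
rewrite big_nat_cond [X in (_ <= X)%N]big_nat_cond.
by apply: leq_sum => k /andP[hk _]; apply: h.
Qed.

Lemma sum_eq_pointwise (f g : nat -> nat) a b : (forall k, (a <= k < b)%N -> (f k <= g k)%N) ->
  (\sum_(a <= k < b) g k <= \sum_(a <= k < b) f k)%N -> forall k, (a <= k < b)%N -> f k = g k.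
Proof.
move=> h hs.
have e : (\sum_(a <= k < b) g k = \sum_(a <= k < b) f k + \sum_(a <= k < b) (g k - f k))%N.
  rewrite -big_split /= big_nat_cond [in RHS]big_nat_cond; apply: eq_bigr => k /andP[hk _].
  by rewrite subnKC // h.
have : (\sum_(a <= k < b) (g k - f k) == 0)%N.
  apply/eqP; move: hs; rewrite e; lia.
rewrite /index_iota sum_nat_seq_eq0 => /allP H k hk.
have := H k; rewrite mem_iota /=.
have -> : (a <= k < a + (b - a))%N by lia.
move=> /(_ isT) /eqP; have := h k hk; lia.
Qed.

Lemma sumz (f : nat -> nat) m n : \sum_(m <= i < n) (f i)%:Z = (\sum_(m <= i < n) f i)%N%:Z.
Proof. by rewrite (big_morph Posz PoszD (erefl (Posz 0))). Qed.

Lemma sum_le_pt (f g : nat -> nat) a b : (forall k, (a <= k < b)%N -> (f k <= g k)%N) ->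
  (\sum_(a <= k < b) f k <= \sum_(a <= k < b) g k)%N.
Proof.
move=> h; rewrite big_nat_cond [X in (_ <= X)%N]big_nat_cond.
by apply: leq_sum => k /andP[hk _]; apply: h.
Qed.

Lemma comb1 (rho x E E' U : nat) (r s dphi dpsi dg : nat -> nat) (Dphi Dpsi : Prop) :
  (\sum_(1 <= j < rho.+1) dphi j + \sum_(1 <= i < rho.+1) r i + U <= rho)%N ->
  (\sum_(1 <= j < rho.+1) dpsi j + \sum_(1 <= i < rho.+1) s i + U <= rho)%N ->
  (forall j, (2 <= j <= rho)%N -> dg j <= dphi j /\ dg j <= dpsi j)%N ->
  (forall i, (rho < i)%N -> r i = 0%N /\ s i = 0%N) ->
  ((dphi 1%N = 0%N /\ forall j, (2 <= j <= rho)%N -> dg j = dphi j) -> Dphi) ->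
  ((dpsi 1%N = 0%N /\ forall j, (2 <= j <= rho)%N -> dg j = dpsi j) -> Dpsi) ->
  (0 < x)%N -> r x <> s x ->
  (x <= E)%N -> (r E <= s E)%N -> (forall j, (x <= j < E)%N -> (s j < r j)%N) ->
  (x <= E')%N -> (s E' <= r E')%N -> (forall j, (x <= j < E')%N -> (r j < s j)%N) ->
  (rho%:Z - 1 - (\sum_(1 <= i < rho) (dg i.+1)%:Z) - U%:Z <=
     (\sum_(1 <= i < rho.+1) (minn (r i) (s i))%:Z) + Num.max (E%:Z - 1) (E'%:Z - 1)) ->
  (E'%:Z - 1 < E%:Z - 1 ->
     (forall i, (x <= i)%N -> i%:Z <= E%:Z - 1 ->
        - x%:Z - 1 <= (s i)%:Z - (r i)%:Z <= -1 /\
        ((s i)%:Z - (r i)%:Z = - x%:Z - 1 -> Dphi)) /\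
     (forall i, E%:Z - 1 < i%:Z ->
        - x%:Z <= (s i)%:Z - (r i)%:Z <= E%:Z - 1 + 1 /\
        ((s i)%:Z - (r i)%:Z = E%:Z - 1 + 1 -> Dpsi))).
Proof.
move=> HA HB Hg H0 HDphi HDpsi x0 rxs xE rsE HE xE' srE' HE' HG ltee.
have EE' : (E' < E)%N by lia.
have E'x : E' = x.
  case: (ltnP x E') => h; last by lia.
  have := HE' x; have := HE x; lia.
have xE1 : (x < E)%N by lia.
have Erho : (E <= rho.+1)%N.
  case: (leqP E rho.+1) => // h.
  have := HE E.-1; have := H0 E.-1; lia.
have xrho : (x <= rho)%N by lia.
rewrite !sumz in HG.
have hmax : Num.max (E%:Z - 1) (E'%:Z - 1) = E%:Z - 1 by lia.
rewrite hmax in HG.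
set DG := (\sum_(1 <= i < rho) dg i.+1)%N in HG.
set Sm := (\sum_(1 <= i < rho.+1) minn (r i) (s i))%N in HG.
have HG' : (rho <= Sm + E + DG + U)%N by lia.
have DGe : DG = (\sum_(2 <= j < rho.+1) dg j)%N by rewrite /DG [RHS]big_add1.
have rho1 : (1 < rho.+1)%N by lia.
have Tphi : (\sum_(1 <= j < rho.+1) dphi j = dphi 1 + \sum_(2 <= j < rho.+1) dphi j)%N
  by rewrite big_ltn.
have Tpsi : (\sum_(1 <= j < rho.+1) dpsi j = dpsi 1 + \sum_(2 <= j < rho.+1) dpsi j)%N
  by rewrite big_ltn.
have DGphi : (DG <= \sum_(2 <= j < rho.+1) dphi j)%N.
  by rewrite DGe; apply: sum_le_pt => k hk; have [] := Hg k; lia.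
have DGpsi : (DG <= \sum_(2 <= j < rho.+1) dpsi j)%N.
  by rewrite DGe; apply: sum_le_pt => k hk; have [] := Hg k; lia.
set Sd := (\sum_(1 <= i < rho.+1) (r i - s i))%N.
set Sd' := (\sum_(1 <= i < rho.+1) (s i - r i))%N.
have Sr : (\sum_(1 <= i < rho.+1) r i = Sm + Sd)%N.
  by rewrite /Sm /Sd -big_split; apply: eq_bigr => i _ /=; lia.
have Ss : (\sum_(1 <= i < rho.+1) s i = Sm + Sd')%N.
  by rewrite /Sm /Sd' -big_split; apply: eq_bigr => i _ /=; lia.
have KA : (Sd + dphi 1 + (\sum_(2 <= j < rho.+1) dphi j - DG) <= E)%N by lia.
have KB : (Sd' + dpsi 1 + (\sum_(2 <= j < rho.+1) dpsi j - DG) <= E)%N by lia.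
have Dphi_of : (Sd < E)%N \/ Dphi.
  case: (ltnP Sd E) => h; first by left.
  right; apply: HDphi; split; first by lia.
  move=> j hj; apply: (@sum_eq_pointwise dg dphi 2 rho.+1) => //; last by lia.
    by move=> k hk; have [] := Hg k; lia.
have Dpsi_of : (Sd' < E)%N \/ Dpsi.
  case: (ltnP Sd' E) => h; first by left.
  right; apply: HDpsi; split; first by lia.
  move=> j hj; apply: (@sum_eq_pointwise dg dpsi 2 rho.+1) => //; last by lia.
    by move=> k hk; have [] := Hg k; lia.
have rangeE : (E - x <= \sum_(x <= k < E) (r k - s k))%N.
  by apply: sum_ge_len => k hk; have := HE k hk; lia.
split.
- move=> i xi iE.
  have iE' : (x <= i < E)%N by lia.
  have si := HE i iE'.
  have L1 : (\sum_(x <= k < E) (r k - s k) <= Sd)%N by apply: sum_sub_range; lia.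
  have L2 := @sum_split3 (fun k => (r k - s k)%N) x i E iE'.
  have L3 : (i - x <= \sum_(x <= k < i) (r k - s k))%N.
    by apply: sum_ge_len => k hk; have := HE k; lia.
  have L4 : (E - i.+1 <= \sum_(i.+1 <= k < E) (r k - s k))%N.
    by apply: sum_ge_len => k hk; have := HE k; lia.
  split; first by lia.
  move=> heq; case: Dphi_of => // h; lia.
- move=> i Ei.
  have Ei' : (E <= i)%N by lia.
  split; last first.
    move=> heq; case: Dpsi_of => // h.
    have irho : (i <= rho)%N by case: (leqP i rho) => // h'; have := H0 i h'; lia.
    have := @sum_split3 (fun k => (s k - r k)%N) 1 i rho.+1; rewrite -/Sd'; lia.
  case: (leqP (s i) (r i)) => hsr; last first.
    have irho : (i <= rho)%N by case: (leqP i rho) => // h'; have := H0 i h'; lia.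
    have := @sum_split3 (fun k => (s k - r k)%N) 1 i rho.+1; rewrite -/Sd'; lia.
  case: (leqP (r i) (s i)) => hrs; first by lia.
  have irho : (i <= rho)%N by case: (leqP i rho) => // h'; have := H0 i h'; lia.
  have M1 := @sum_split3 (fun k => (r k - s k)%N) x i rho.+1.
  have M2 : (\sum_(x <= k < E) (r k - s k) <= \sum_(x <= k < i) (r k - s k))%N
    by apply: sum_sub_range; lia.
  have M3 : (\sum_(x <= k < rho.+1) (r k - s k) <= Sd)%N by apply: sum_sub_range; lia.
  lia.
Qed.

Section Hom.
Variable F : fieldType.

Definition hom (f : {poly F}) : {mpoly F[2]} := 'X_1 * (f`_0)%:MP + 'X_0 * (f`_1)%:MP.

Lemma homD f g : hom (f + g) = hom f + hom g.
Proof. by rewrite /hom !coefD !raddfD /= !mulrDr addrACA. Qed.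

Lemma hom0 : hom 0 = 0.
Proof. by rewrite /hom !coef0 raddf0 !mulr0 addr0. Qed.

Lemma homCM c f : hom (c%:P * f) = c%:MP * hom f.
Proof. by rewrite /hom !coefCM !mpolyCM mulrDr !mulrA ![c%:MP * _]mulrC. Qed.

Lemma homMC f c : hom (f * c%:P) = hom f * c%:MP.
Proof. by rewrite /hom !coefMC !mpolyCM mulrDl !mulrA. Qed.

Lemma hom_sum (I : Type) (r : seq I) (P : pred I) (G : I -> {poly F}) :
  hom (\sum_(i <- r | P i) G i) = \sum_(i <- r | P i) hom (G i).
Proof. exact: (big_morph _ homD hom0). Qed.

Lemma map_hom0 m n : map_mx hom (0 : 'M_(m, n)) = 0.
Proof. by apply/matrixP => i j; rewrite !mxE hom0. Qed.

Lemma map_hom_PMQ m n p q (P : 'M[F]_(m, n)) (M : 'M[{poly F}]_(n, p)) (Q : 'M[F]_(p, q)) :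
  map_mx hom (map_mx polyC P *m M *m map_mx polyC Q) =
  map_mx (@mpolyC 2 F) P *m map_mx hom M *m map_mx (@mpolyC 2 F) Q.
Proof.
apply/matrixP => i j; rewrite !mxE hom_sum; apply: eq_bigr => l _.
rewrite !mxE homMC hom_sum; congr (_ * _); apply: eq_bigr => k _.
by rewrite !mxE homCM.
Qed.

Lemma map_hom_pen p q (A0 A1 : 'M[F]_(p, q)) : map_mx hom (pen A0 A1) = hpen A0 A1.
Proof.
apply/matrixP => i j; rewrite !mxE /hom !coefD coefC coefC /= coefXM coefXM /= coefC /=.
by rewrite addr0 add0r.
Qed.

Lemma hom_X : hom 'X = 'X_0.
Proof. by rewrite /hom !coefX /= raddf0 mulr0 add0r mpolyC1 mulr1. Qed.

Lemma hom_1 : hom 1 = 'X_1.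
Proof. by rewrite /hom !coef1 /= raddf0 mulr0 addr0 mpolyC1 mulr1. Qed.

Lemma map_hom_Lgs cs : map_mx hom (Lgs 'X 1 cs) = Lgs 'X_0 'X_1 cs.
Proof.
elim: cs => [|c cs IH] /=; first exact: map_hom0.
rewrite map_block_mx IH !map_hom0; congr block_mx.
apply/matrixP => i j; rewrite !mxE.
by case: ifP => _; [exact: hom_X | case: ifP => _; [exact: hom_1 | exact: hom0]].
Qed.

Lemma Lblocks_Lgs cs : @Lblocks F cs = Lgs 'X 1 cs.
Proof. by elim: cs => [|c cs IH] //=; rewrite IH. Qed.

Lemma map_hom_KCF cs us n (R0 R1 : 'M[F]_n) :
  map_mx hom (KCFmx cs us R0 R1) = Kgen 'X_0 'X_1 cs us (hpen R0 R1).
Proof.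
rewrite /KCFmx /Kgen !map_block_mx !map_hom0 map_hom_pen -map_trmx !Lblocks_Lgs.
by rewrite !map_hom_Lgs.
Qed.

End Hom.

Section Ev.
Variable F : fieldType.

Definition evh (i : 'I_2) : {poly F} := if i == 0 then 'X else 1.
Definition ev (p : {mpoly F[2]}) : {poly F} := mmap (@polyC F) evh p.

Lemma ev_hpen n (R0 R1 : 'M[F]_n) : map_mx ev (hpen R0 R1) = pen R0 R1.
Proof.
apply/matrixP => i j; rewrite !mxE /ev rmorphD !rmorphM /= !mmapC !mmapX !mmap1U /evh /=.
by rewrite mul1r.
Qed.

Lemma det_hpen_neq0 n (R0 R1 : 'M[F]_n) : \det (pen R0 R1) != 0 -> \det (hpen R0 R1) != 0.
Proof.
apply: contraNneq => h; rewrite -ev_hpen.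
rewrite (det_map_mx (mmap (@polyC F) evh)).
by rewrite h rmorph0.
Qed.

Lemma rank_unit_l {K : fieldType} m n (U : 'M[K]_m) (M : 'M[K]_(m, n)) :
  U \in unitmx -> \rank (U *m M) = \rank M.
Proof.
move=> hU; apply/eqP; rewrite eqn_leq mxrankM_maxr /=.
by have := mxrankM_maxr (invmx U) (U *m M); rewrite mulKmx.
Qed.

Local Notation tf := (@FracField.tofrac {poly F}).

Lemma rank_Lgs cs : \rank (map_mx tf (Lgs 'X 1 cs)) = sumn cs.
Proof.
apply/eqP; rewrite eqn_leq rank_leq_row /=.
have hu : map_mx tf (Lgs 'X 1 cs *m Sels sel1 cs) \in unitmx.
  by rewrite unitmxE det_map_mx (det_Lgs _ _ _ _ (det_Lg1 _ _)) expr1n rmorph1 unitr1.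
by have := mxrankM_maxl (map_mx tf (Lgs 'X 1 cs)) (map_mx tf (Sels sel1 cs)); rewrite -map_mxM (mxrank_unit hu).
Qed.

Lemma rank_KCF cs us n (R0 R1 : 'M[F]_n) : \det (pen R0 R1) != 0 ->
  \rank (map_mx tf (KCFmx cs us R0 R1)) = (sumn cs + sumn us + n)%N.
Proof.
move=> hd; rewrite /KCFmx !map_block_mx !map_mx0 !rank_diag_block_mx.
rewrite -map_trmx mxrank_tr !Lblocks_Lgs !rank_Lgs; congr (_ + _)%N.
apply: mxrank_unit; rewrite unitmxE det_map_mx unitfE tofrac_eq0 //.
Qed.

End Ev.

Lemma unit_map2 {F : fieldType} k (Q : 'M[F]_k) : Q \in unitmx ->
  map_mx (@FracField.tofrac {poly F}) (map_mx polyC Q) \in unitmx.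
Proof.
by rewrite !unitmxE !det_map_mx !unitfE tofrac_eq0 polyC_eq0.
Qed.

Lemma sumn_S us : (sumn us <= sumn (map S us))%N.
Proof. elim: us => //= u us IH; lia. Qed.

Lemma pencil_facts {F : fieldType} {p q} {A0 A1 : 'M[F]_(p, q)} {phi : nat -> {mpoly F[2]}} {cs us} :
  hinv_factors A0 A1 phi -> minimal_indices A0 A1 cs us ->
  [/\ (pen_rank A0 A1 <= p)%N,
      (forall j, (1 <= j <= pen_rank A0 A1)%N -> phi j != 0) &
      (\sum_(1 <= j < (pen_rank A0 A1).+1) tdeg (phi j) + sumn cs + sumn us <= pen_rank A0 A1)%N].
Proof.
move=> hinv [n [R0 [R1 [P [Q [Ep [Eq [Pu Qu dR heq]]]]]]]].
subst p q; rewrite castmx_id in heq.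
have Hr : pen_rank A0 A1 = (sumn cs + sumn us + n)%N.
  rewrite /pen_rank; transitivity (\rank (map_mx (@FracField.tofrac {poly F}) (KCFmx cs us R0 R1)));
    last exact: rank_KCF.
  rewrite -heq !map_mxM.
  rewrite mxrankMfree; last by rewrite row_free_unit unit_map2.
  by rewrite rank_unit_l // unit_map2.
have Hh : map_mx (@mpolyC 2 F) P *m hpen A0 A1 *m map_mx (@mpolyC 2 F) Q =
          Kgen 'X_0 'X_1 cs us (hpen R0 R1).
  by rewrite -map_hom_pen -map_hom_PMQ heq map_hom_KCF.
case: (posnP (sumn cs + sumn us + n)) => hN.
  rewrite Hr hN; split; [by have := sumn_S us; lia | by move=> j hj; lia | ].
  by rewrite big_geq //; lia.
have gm := hinv (pen_rank A0 A1) (ltac:(rewrite Hr; lia)).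
rewrite Hr in gm; case: gm => gm _.
set D := \prod_(1 <= i < (sumn cs + sumn us + n).+1) phi i in gm *.
have key : forall (sel : forall k, 'M[{mpoly F[2]}]_(k.+1, k)) z,
    (forall k, \det (Lg 'X_0 'X_1 k *m sel k) = z ^+ k) ->
    mdvd D (z ^+ (sumn cs + sumn us) * \det (hpen R0 R1)).
  move=> sel z hs; rewrite -(det_minor _ _ _ _ _ _ _ _ hs) -Hh.
  have := @dvd_det_mulmx _ _ _ _ (hpen A0 A1) D gm
    (Xm sel cs us n *m map_mx (@mpolyC 2 F) P) (map_mx (@mpolyC 2 F) Q *m Ym sel cs us n).
  by rewrite !mulmxA.
have hR : \det (hpen R0 R1) != 0 := det_hpen_neq0 _ _ _ _ dR.
have [hD hdeg] := lead_bound _ _ _ hR (key _ _ (det_Lg0 _ _)) (key _ _ (det_Lg1 _ _)).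
have hRdeg : (tdeg (\det (hpen R0 R1)) <= n)%N.
  by apply: tdeg_det => i j; rewrite mxE; exact: msize_lin.
have hprod := tdeg_prod _ _ hD.
rewrite Hr; split.
- by have := sumn_S us; lia.
- move=> j hj; apply: contraNneq hD => hj0.
  rewrite /D (@big_cat_nat _ _ _ j) /=; [|lia|lia].
  by rewrite [X in _ * X]big_ltn ?hj0 ?mul0r ?mulr0 //; lia.
- by move: hprod hdeg hRdeg; rewrite -/D; lia.
Qed.
Lemma conj_sum N cs : all (fun c => c <= N)%N cs ->
  (\sum_(1 <= i < N.+1) count (fun c => i <= c)%N cs = sumn cs)%N.
Proof.
elim: cs => [|c cs IH] /=; first by rewrite big1.
move=> /andP[hc hcs]; rewrite big_split /= IH //; congr (_ + _)%N.
rewrite (@big_cat_nat _ _ _ c.+1) //= ?ltnS //.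
rewrite [X in (_ + X)%N]big_nat_cond [X in (_ + X)%N]big1 ?addn0; last first.
  by move=> i /andP[/andP[h1 h2] _]; rewrite leqNgt h1.
rewrite big_nat_cond (eq_bigr (fun _ => 1%N)); last first.
  by move=> i /andP[/andP[_ h] _]; rewrite ltnS in h; rewrite h.
by rewrite -big_nat_cond sum_nat_const_nat muln1 subn1.
Qed.

Lemma sumn_le_all N cs : (sumn cs <= N)%N -> all (fun c => c <= N)%N cs.
Proof.
elim: cs => [|c cs IH] //= h; apply/andP; split; first by lia.
by apply: IH; lia.
Qed.

Lemma conj0 N r0 cs k : all (fun c => c <= N)%N cs -> (N < k)%N -> conjseq r0 cs k = 0%N.
Proof.
move=> /allP h hk; rewrite /conjseq; case: ifP => [/eqP hk0|_]; first by lia.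
apply/eqP; rewrite -leqn0 leqNgt -has_count; apply/hasPn => c /h; lia.
Qed.
Theorem lemma5p1 (F : closedFieldType) (p q : nat) (A0 A1 B0 B1 : 'M[F]_(p, q))
  (phi psi : nat -> {mpoly F[2]}) (cs ds us vs : seq nat)
  (g : nat -> {mpoly F[2]}) (x E E' : nat) :
  let rho1 := pen_rank A0 A1 in
  let rho2 := pen_rank B0 B1 in
  let rho := minn rho1 rho2 in
  let r := conjseq (q - rho1) cs in
  let s := conjseq (q - rho2) ds in
  let r' := conjseq (p - rho1) us in
  let s' := conjseq (p - rho2) vs in
  let e : int := E%:Z - 1 in
  let e' : int := E'%:Z - 1 in
  let G : int := rho%:Z - 1 - (\sum_(1 <= i < rho) (tdeg (g i.+1))%:Z)
                 - (\sum_(1 <= i < rho.+1) (r' i)%:Z) in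
  let Dphi := forall j, (1 <= j <= rho)%N -> mdvd (phi j) (psi j) in
  let Dpsi := forall j, (1 <= j <= rho)%N -> mdvd (psi j) (phi j) in
  hinv_factors A0 A1 phi -> hinv_factors B0 B1 psi ->
  minimal_indices A0 A1 cs us -> minimal_indices B0 B1 ds vs ->
  (* g (i+1) is a gcd of phi_(i+1) and psi_(i+1) *)
  (forall j, (2 <= j <= rho)%N -> is_gcd (g j) (phi j) (psi j)) ->
  r <> s -> (forall i, r' i = s' i) ->
  (* x = min {i : r_i <> s_i} *)
  r x <> s x -> (forall i, (i < x)%N -> r i = s i) ->
  (* E = e + 1 = min {j >= x : s_j >= r_j} *)
  (x <= E)%N -> (r E <= s E)%N -> (forall j, (x <= j < E)%N -> (s j < r j)%N) ->
  (* E' = e' + 1 = min {j >= x : r_j >= s_j} *)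
  (x <= E')%N -> (s E' <= r E')%N -> (forall j, (x <= j < E')%N -> (r j < s j)%N) ->
  G <= (\sum_(1 <= i < rho.+1) (minn (r i) (s i))%:Z) + Num.max e e' ->
  (e' < e ->
     (forall i, (x <= i)%N -> i%:Z <= e ->
        - x%:Z - 1 <= (s i)%:Z - (r i)%:Z <= -1 /\
        ((s i)%:Z - (r i)%:Z = - x%:Z - 1 -> Dphi)) /\
     (forall i, e < i%:Z ->
        - x%:Z <= (s i)%:Z - (r i)%:Z <= e + 1 /\
        ((s i)%:Z - (r i)%:Z = e + 1 -> Dpsi))) /\
  (e < e' ->
     (forall i, (x <= i)%N -> i%:Z <= e' ->
        - x%:Z - 1 <= (r i)%:Z - (s i)%:Z <= -1 /\
        ((r i)%:Z - (s i)%:Z = - x%:Z - 1 -> Dpsi)) /\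
     (forall i, e' < i%:Z ->
        - x%:Z <= (r i)%:Z - (s i)%:Z <= e' + 1 /\
        ((r i)%:Z - (s i)%:Z = e' + 1 -> Dphi))).
Proof.
move=> rho1 rho2 rho r s r' s' e e' G Dphi Dpsi hA hB mA mB hg rs hr' rx hx xE rE hE xE' sE' hE' HG.
have [p1 nz1 deg1] := pencil_facts hA mA.
have [p2 nz2 deg2] := pencil_facts hB mB.
rewrite -/rho1 in p1 nz1 deg1; rewrite -/rho2 in p2 nz2 deg2.
have r12 : rho1 = rho2.
  have := hr' 0%N; rewrite /r' /s' /conjseq /=; lia.
have rhoE : rho = rho1 by rewrite /rho r12 minnn.
rewrite -r12 in nz2 deg2; rewrite -rhoE in nz1 nz2 deg1 deg2.
have acs : all (fun c => c <= rho)%N cs by apply: sumn_le_all; lia.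
have aus : all (fun c => c <= rho)%N us by apply: sumn_le_all; lia.
have ads : all (fun c => c <= rho)%N ds by apply: sumn_le_all; lia.
have avs : all (fun c => c <= rho)%N vs by apply: sumn_le_all; lia.
have Sr : (\sum_(1 <= i < rho.+1) r i = sumn cs)%N.
  rewrite -(@conj_sum rho _ acs) big_nat_cond [RHS]big_nat_cond.
  by apply: eq_bigr => i /andP[/andP[h _] _]; rewrite /r /conjseq; case: ifP => // /eqP; lia.
have Ss : (\sum_(1 <= i < rho.+1) s i = sumn ds)%N.
  rewrite -(@conj_sum rho _ ads) big_nat_cond [RHS]big_nat_cond.
  by apply: eq_bigr => i /andP[/andP[h _] _]; rewrite /s /conjseq; case: ifP => // /eqP; lia.
have Sr' : (\sum_(1 <= i < rho.+1) r' i = sumn us)%N.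
  rewrite -(@conj_sum rho _ aus) big_nat_cond [RHS]big_nat_cond.
  by apply: eq_bigr => i /andP[/andP[h _] _]; rewrite /r' /conjseq; case: ifP => // /eqP; lia.
have Ss' : (\sum_(1 <= i < rho.+1) s' i = sumn vs)%N.
  rewrite -(@conj_sum rho _ avs) big_nat_cond [RHS]big_nat_cond.
  by apply: eq_bigr => i /andP[/andP[h _] _]; rewrite /s' /conjseq; case: ifP => // /eqP; lia.
have Uuv : sumn us = sumn vs by rewrite -Sr' -Ss'; apply: eq_bigr => i _; apply: hr'.
have x0 : (0 < x)%N.
  case: (posnP x) => // hx0; exfalso; apply: rx; rewrite hx0 /r /s /conjseq /= -/rho1 -/rho2 r12 //.
have H0 : forall i, (rho < i)%N -> r i = 0%N /\ s i = 0%N.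
  by move=> i hi; split; apply: conj0 hi.
have Hg : forall j, (2 <= j <= rho)%N -> (tdeg (g j) <= tdeg (phi j))%N /\ (tdeg (g j) <= tdeg (psi j))%N.
  move=> j hj; have [d1 [d2 _]] := hg j hj.
  have h1 : (1 <= j <= rho)%N by lia.
  by split; [case: (tdeg_dvd d1 (nz1 j h1)) | case: (tdeg_dvd d2 (nz2 j h1))].
have HDphi : (tdeg (phi 1%N) = 0%N /\ forall j, (2 <= j <= rho)%N -> tdeg (g j) = tdeg (phi j)) -> Dphi.
  move=> [h1 h2] j hj; case: (ltngtP j 1) => hj1; first by lia.
    have [d1 [d2 _]] := hg j (ltac:(lia)).
    have [_ h] := tdeg_dvd d1 (nz1 j hj).
    have [c hc] := h (h2 j (ltac:(lia))); case: d2 => c' hc'.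
    by exists (c' * c); rewrite hc' hc mulrA.
  by rewrite hj1; apply: tdeg0_dvd => //; apply: nz1; lia.
have HDpsi : (tdeg (psi 1%N) = 0%N /\ forall j, (2 <= j <= rho)%N -> tdeg (g j) = tdeg (psi j)) -> Dpsi.
  move=> [h1 h2] j hj; case: (ltngtP j 1) => hj1; first by lia.
    have [d1 [d2 _]] := hg j (ltac:(lia)).
    have [_ h] := tdeg_dvd d2 (nz2 j hj).
    have [c hc] := h (h2 j (ltac:(lia))); case: d1 => c' hc'.
    by exists (c' * c); rewrite hc' hc mulrA.
  by rewrite hj1; apply: tdeg0_dvd => //; apply: nz2; lia.
have HG' : rho%:Z - 1 - (\sum_(1 <= i < rho) (tdeg (g i.+1))%:Z) - (sumn us)%:Z <=
     (\sum_(1 <= i < rho.+1) (minn (r i) (s i))%:Z) + Num.max (E%:Z - 1) (E'%:Z - 1).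
  by move: HG; rewrite /G (sumz r' 1 rho.+1) Sr'.
split.
- apply: (@comb1 rho x E E' (sumn us) r s (fun j => tdeg (phi j)) (fun j => tdeg (psi j))
           (fun j => tdeg (g j))) => //; try lia.
- apply: (@comb1 rho x E' E (sumn us) s r (fun j => tdeg (psi j)) (fun j => tdeg (phi j))
           (fun j => tdeg (g j))) => //; try lia.
  + by move=> j hj; have [] := Hg j hj.
  + by move=> i hi; have [] := H0 i hi.
  + move: HG'; rewrite maxC [X in _ <= X + _](eq_bigr (fun i => (minn (s i) (r i))%:Z)) // => i _; by rewrite minnC.
Qed.
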